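(* Let $\mathcal K$ be a class of algebras of the same type $F$. Then: (1) $\mathsf{DH}(\mathcal K)\subseteq\mathsf{HD}(\mathcal K)$; (2) $\mathsf{DS}(\mathcal K)\subseteq\mathsf{ISD}(\mathcal K)$; (3) $\mathsf{DP}(\mathcal K)\subseteq\mathsf{IPD}(\mathcal K)$; (4) $\mathsf{VD}(\mathcal K)=\mathsf{ISD}(\mathsf V(\mathcal K))$.
   Context: For an algebra $\mathbf B$ of type $F$, $D(\mathbf B)=(\mathbf B\times\mathbf B,\tau_B)$ with $\tau_B(x,y)=(x,x)$ is the diagonal state-morphism algebra (an algebra of type $F$ extended by the unary operation $\tau_B$), and for a class $\mathcal K$, $\mathsf D(\mathcal K)=\{D(\mathbf B):\mathbf B\in\mathcal K\}$. $\mathsf I,\mathsf H,\mathsf S,\mathsf P,\mathsf V$ denote, for a class of algebras, the class of isomorphic images, homomorphic images, subalgebras, direct products, and the generated variety, respectively; compositions are applied right to left (e.g. $\mathsf{DH}(\mathcal K)=\mathsf D(\mathsf H(\mathcal K))$). *)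

(* Defs.v *)
From mathcomp Require Import all_boot.
Set Implicit Arguments. Unset Strict Implicit. Unset Printing Implicit Defensive.

Record signature := Signature { symb : Type; arity : symb -> nat }.

Record algebra (s : signature) := Algebra {
  carrier :> Type;
  op : forall f : symb s, ('I_(arity f) -> carrier) -> carrier }.

Arguments op {s} a f _ : rename.

Definition cls (s : signature) := algebra s -> Prop.

Definition is_hom (s : signature) (A B : algebra s) (h : A -> B) : Prop :=
  forall (f : symb s) (a : 'I_(arity f) -> A), h (op A f a) = op B f (fun i => h (a i)).

Definition is_iso (s : signature) (A B : algebra s) (h : A -> B) : Prop :=
  is_hom h /\ (forall x y, h x = h y -> x = y) /\ (forall y, exists x, h x = y).

Definition closed_sub (s : signature) (B : algebra s) (P : B -> Prop) : Prop :=
  forall (f : symb s) (a : 'I_(arity f) -> B), (forall i, P (a i)) -> P (op B f a).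

Definition subalg (s : signature) (B : algebra s) (P : B -> Prop)
  (HP : closed_sub P) : algebra s :=
  @Algebra s {x : B | P x}
    (fun f a => exist P (op B f (fun i => proj1_sig (a i)))
                       (HP f (fun i => proj1_sig (a i)) (fun i => proj2_sig (a i)))).

Definition prodalg (s : signature) (I : Type) (B : I -> algebra s) : algebra s :=
  @Algebra s (forall i : I, B i) (fun f a => fun i => op (B i) f (fun j => a j i)).

Definition Icl (s : signature) (K : cls s) : cls s :=
  fun A => exists B, K B /\ exists h : A -> B, is_iso h.

Definition Hcl (s : signature) (K : cls s) : cls s :=
  fun A => exists B, K B /\ exists h : B -> A, is_hom h /\ (forall y, exists x, h x = y).

Definition Scl (s : signature) (K : cls s) : cls s :=
  fun A => exists (B : algebra s) (P : B -> Prop) (HP : closed_sub P), K B /\ A = subalg HP.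

Definition Pcl (s : signature) (K : cls s) : cls s :=
  fun A => exists (I : Type) (B : I -> algebra s), (forall i, K (B i)) /\ A = prodalg B.

Definition Vcl (s : signature) (K : cls s) : cls s :=
  fun A => forall C : cls s, (forall B, K B -> C B) ->
    (forall B, Hcl C B -> C B) -> (forall B, Scl C B -> C B) ->
    (forall B, Pcl C B -> C B) -> C A.

(* Extension of the type by one unary operation symbol (None = tau). *)
Definition ext_sig (s : signature) : signature :=
  @Signature (option (symb s)) (fun o => match o with Some f => arity f | None => 1 end).

(* The diagonal state-morphism algebra D(B) = (B x B, tau_B), tau_B(x,y) = (x,x). *)
Definition Dalg (s : signature) (B : algebra s) : algebra (ext_sig s) :=
  @Algebra (ext_sig s) (B * B)%type
    (fun o => match o return ('I_(@arity (ext_sig s) o) -> (B * B)%type) -> (B * B)%type with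
      | Some f => fun a => (op B f (fun i => (a i).1), op B f (fun i => (a i).2))
      | None => fun a => ((a ord0).1, (a ord0).1)
      end).

Definition Dcl (s : signature) (K : cls s) : cls (ext_sig s) :=
  fun A => exists B, K B /\ A = Dalg B.

(* Main.v *)
Require Import Defs.
From mathcomp Require Import all_boot.
From Stdlib Require Import ProofIrrelevance FunctionalExtensionality IndefiniteDescription.
Set Implicit Arguments. Unset Strict Implicit.

Lemma choice_fun (I A : Type) (R : I -> A -> Prop) :
  (forall i, exists x, R i x) -> exists g : I -> A, forall i, R i (g i).
Proof.
  intros H. exists (fun i => proj1_sig (constructive_indefinite_description _ (H i))).
  intro i. exact (proj2_sig (constructive_indefinite_description _ (H i))).
Qed.

Lemma lift_fun (I A B : Type) (h : A -> B) (surj : forall y, exists x, h x = y) (a : I -> B) :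
  exists a0 : I -> A, a = fun i => h (a0 i).
Proof.
  destruct (@choice_fun _ _ (fun i x => h x = a i) (fun i => surj (a i))) as [g Hg].
  exists g. extensionality i. by rewrite Hg.
Qed.

Lemma sig_eq (T : Type) (P : T -> Prop) (x y : {z | P z}) :
  proj1_sig x = proj1_sig y -> x = y.
Proof. destruct x, y; simpl; intros ->; f_equal; apply proof_irrelevance. Qed.

Lemma iso_inv s (A B : algebra s) (h : A -> B) :
  is_iso h -> exists g : B -> A, is_hom g /\ (forall y, exists x, g x = y).
Proof.
  intros [Hh [Hi Hs]].
  destruct (@choice_fun _ _ (fun y x => h x = y) Hs) as [g Hg].
  exists g; split.
  - intros f b. apply Hi. rewrite Hh Hg. f_equal. extensionality i. by rewrite Hg.
  - intros x. exists (h x). apply Hi. apply Hg.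
Qed.

Section V.
Variable s : signature.
Variable K : cls s.
Lemma V_K A : K A -> Vcl K A.
Proof. intros HA C HK _ _ _. auto. Qed.
Lemma V_H A : Hcl (Vcl K) A -> Vcl K A.
Proof.
  intros [B [HB [h [Hh Hs]]]] C HK HH HS HP. apply HH. exists B; split.
  apply HB; auto. exists h; auto.
Qed.
Lemma V_S A : Scl (Vcl K) A -> Vcl K A.
Proof.
  intros [B [P [HP [HB ->]]]] C HK HH HS HPP. apply HS. exists B, P, HP; split; auto.
  apply HB; auto.
Qed.
Lemma V_P A : Pcl (Vcl K) A -> Vcl K A.
Proof.
  intros [I [B [HB ->]]] C HK HH HS HPP. apply HPP. exists I, B; split; auto.
  intro i; apply HB; auto.
Qed.
Lemma V_I A : Icl (Vcl K) A -> Vcl K A.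
Proof.
  intros [B [HB [h Hh]]]. destruct (iso_inv Hh) as [g Hg]. apply V_H.
  exists B; split; auto. exists g; auto.
Qed.
End V.

Lemma D_hom s (B C : algebra s) (h : B -> C) : is_hom h -> (forall y, exists x, h x = y) ->
  exists g : Dalg B -> Dalg C, is_hom g /\ (forall y, exists x, g x = y).
Proof.
  intros Hh Hs. exists (fun p : Dalg B => (h p.1, h p.2) : Dalg C). split.
  - intros [f|] a; simpl. rewrite !Hh. reflexivity. reflexivity.
  - intros [y1 y2]. destruct (Hs y1) as [x1 <-], (Hs y2) as [x2 <-]. exists (x1, x2). reflexivity.
Qed.

Lemma D_sub s (B : algebra s) (P : B -> Prop) (HP : closed_sub P) :
  exists (P' : Dalg B -> Prop) (HP' : closed_sub P') (h : Dalg (subalg HP) -> subalg HP'), is_iso h.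
Proof.
  pose P' := fun z : Dalg B => P z.1 /\ P z.2.
  assert (HP' : closed_sub P').
  { intros [f|] a Ha; simpl; split.
    - apply HP; intro i; apply Ha.
    - apply HP; intro i; apply Ha.
    - apply Ha.
    - apply Ha. }
  exists P', HP'.
  exists (fun z : Dalg (subalg HP) => exist P' (proj1_sig z.1, proj1_sig z.2)
                                       (conj (proj2_sig z.1) (proj2_sig z.2))).
  split; [|split].
  - intros [f|] a; apply sig_eq; reflexivity.
  - intros [x1 x2] [y1 y2] E. apply (f_equal (@proj1_sig _ _)) in E. simpl in E.
    injection E as E1 E2. f_equal; apply sig_eq; auto.
  - intros [[y1 y2] [H1 H2]]. exists (exist _ y1 H1, exist _ y2 H2). apply sig_eq. reflexivity.
Qed.

Lemma D_prod s (I : Type) (B : I -> algebra s) :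
  exists h : Dalg (prodalg B) -> prodalg (fun i => Dalg (B i)), is_iso h.
Proof.
  exists (fun z : Dalg (prodalg B) => (fun i => (z.1 i, z.2 i)) : prodalg (fun i => Dalg (B i))).
  split; [|split].
  - intros [f|] a; reflexivity.
  - intros [x1 x2] [y1 y2] E; simpl in E. f_equal; extensionality i;
      apply (f_equal (fun g => g i)) in E; injection E; auto.
  - intros z. exists ((fun i => (z i).1), (fun i => (z i).2)). extensionality i.
    simpl. symmetry; apply surjective_pairing.
Qed.

Definition red s (A : algebra (ext_sig s)) : algebra s :=
  @Algebra s A (fun f a => op A (Some f) a).
Definition tau s (A : algebra (ext_sig s)) (x : A) : A := op A None (fun _ => x).
Definition SM s (K : cls s) : cls (ext_sig s) := fun A =>
  Vcl K (red A) /\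
  (forall f (a : 'I_(arity f) -> A), tau (op A (Some f) a) = op A (Some f) (fun i => tau (a i))) /\
  (forall x : A, tau (tau x) = tau x).

Lemma opNone s (A : algebra (ext_sig s)) a : op A None a = tau (a ord0).
Proof.
  unfold tau. f_equal. extensionality i.
  destruct i as [[|k] Hk]. f_equal. apply val_inj. reflexivity. discriminate.
Qed.

Section SMs.
Variable s : signature.
Variable K : cls s.

Lemma SM_D A : Dcl K A -> SM K A.
Proof.
  intros [B [HB ->]]. split; [|split].
  - apply V_I. exists (prodalg (fun _ : bool => B)). split.
    + apply V_P. exists bool, (fun _ => B). split; [intros; apply V_K; auto | reflexivity].
    + exists (fun z : red (Dalg B) => (fun b => if b then z.1 else z.2) : prodalg (fun _ : bool => B)).
      split; [|split].
      * intros f a; extensionality b; destruct b; reflexivity.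
      * intros [x1 x2] [y1 y2] E.
        have E1 := f_equal (fun g => g true) E. have E2 := f_equal (fun g => g false) E.
        simpl in *. congruence.
      * intros z; exists (z true, z false); extensionality b; destruct b; reflexivity.
  - intros f a; reflexivity.
  - intros x; reflexivity.
Qed.

Lemma SM_H A : Hcl (SM K) A -> SM K A.
Proof.
  intros [A0 [[HV [Ht Hi]] [h [Hh Hs]]]].
  have tau_h : forall y, tau (h y) = h (tau y).
  { intro y. unfold tau. rewrite Hh. reflexivity. }
  split; [|split].
  - apply V_H. exists (red A0); split; auto. exists h; split; auto.
    intros f a; apply (Hh (Some f)).
  - intros f a. destruct (lift_fun Hs a) as [a0 ->].
    rewrite -(Hh (Some f)) tau_h Ht (Hh (Some f)). f_equal. extensionality i. by rewrite tau_h.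
  - intro y. destruct (Hs y) as [x <-]. by rewrite !tau_h Hi.
Qed.

Lemma SM_S A : Scl (SM K) A -> SM K A.
Proof.
  intros [A0 [P [HP [[HV [Ht Hi]] ->]]]]. split; [|split].
  - apply V_S. exists (red A0), P, (fun f a Ha => HP (Some f) a Ha). split; auto.
  - intros f a. apply sig_eq. exact (Ht f (fun i => proj1_sig (a i))).
  - intros x. apply sig_eq. exact (Hi (proj1_sig x)).
Qed.

Lemma SM_P A : Pcl (SM K) A -> SM K A.
Proof.
  intros [I [B [HB ->]]]. split; [|split].
  - apply V_P. exists I, (fun i => red (B i)). split; [intro i; apply (HB i) | reflexivity].
  - intros f a. extensionality i. exact (proj1 (proj2 (HB i)) f (fun j => a j i)).
  - intros x. extensionality i. exact (proj2 (proj2 (HB i)) (x i)).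
Qed.

Lemma SM_emb A : SM K A -> Icl (Scl (Dcl (Vcl K))) A.
Proof.
  intros [HV [Ht Hi]].
  pose e := fun a : A => (tau a, a) : Dalg (red A).
  pose P := fun z : Dalg (red A) => exists a, z = e a.
  assert (HP : closed_sub P).
  { intros [f|] z Hz.
    - destruct (choice_fun Hz) as [a0 Ha0].
      exists (op A (Some f) a0).
      have -> : z = (fun i => e (a0 i)) by extensionality i.
      rewrite /e /=. rewrite Ht. reflexivity.
    - destruct (Hz ord0) as [a0 Ha0]. exists (tau a0).
      rewrite /= Ha0 /e /= Hi. reflexivity. }
  exists (subalg HP). split.
  - exists (Dalg (red A)), P, HP. split; [exists (red A); auto | reflexivity].
  - exists (fun a => exist P (e a) (ex_intro _ a erefl)). split; [|split].
    + intros [f|] a; apply sig_eq; rewrite /e /=.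
      * rewrite Ht. reflexivity.
      * rewrite opNone Hi. reflexivity.
    + intros x y E. apply (f_equal (fun z => snd (proj1_sig z))) in E. exact E.
    + intros [z [a ->]]. exists a. apply sig_eq. reflexivity.
Qed.

Lemma DV B : Vcl K B -> Vcl (Dcl K) (Dalg B).
Proof.
  intros HB. apply (HB (fun B => Vcl (Dcl K) (Dalg B))).
  - intros B0 HB0; apply V_K; exists B0; auto.
  - intros B0 [B1 [HB1 [h [Hh Hs]]]]. destruct (D_hom Hh Hs) as [g Hg].
    apply V_H. exists (Dalg B1); split; auto; exists g; auto.
  - intros B0 [B1 [P [HP [HB1 ->]]]]. destruct (D_sub HP) as [P' [HP' [h Hh]]].
    apply V_I. exists (subalg HP'); split; [apply V_S; exists (Dalg B1), P', HP'; auto | exists h; auto].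
  - intros B0 [I [Bi [HBi ->]]]. destruct (D_prod Bi) as [h Hh]. apply V_I.
    exists (prodalg (fun i => Dalg (Bi i))).
    split; [apply V_P; exists I, (fun i => Dalg (Bi i)); auto | exists h; auto].
Qed.
End SMs.

Theorem lemma4p2 (s : signature) (K : cls s) :
  (forall A, Dcl (Hcl K) A -> Hcl (Dcl K) A) /\
  (forall A, Dcl (Scl K) A -> Icl (Scl (Dcl K)) A) /\
  (forall A, Dcl (Pcl K) A -> Icl (Pcl (Dcl K)) A) /\
  (forall A, Vcl (Dcl K) A <-> Icl (Scl (Dcl (Vcl K))) A).
Proof.
  split; [|split; [|split]].
  - intros A [B [[B0 [HB0 [h [Hh Hs]]]] ->]]. destruct (D_hom Hh Hs) as [g Hg].
    exists (Dalg B0); split; [exists B0; auto | exists g; auto].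
  - intros A [B [[B0 [P [HP [HB0 ->]]]] ->]]. destruct (D_sub HP) as [P' [HP' [h Hh]]].
    exists (subalg HP'); split; [exists (Dalg B0), P', HP'; split; [exists B0; auto | reflexivity] | exists h; auto].
  - intros A [B [[I [Bi [HBi ->]]] ->]]. destruct (D_prod Bi) as [h Hh].
    exists (prodalg (fun i => Dalg (Bi i))); split;
      [exists I, (fun i => Dalg (Bi i)); split; [intro i; exists (Bi i); auto | reflexivity] | exists h; auto].
  - intros A; split.
    + intro H. apply SM_emb. apply (H (SM K)).
      * apply SM_D.
      * apply SM_H.
      * apply SM_S.
      * apply SM_P.
    + intros [B [[B1 [P [HP [[B0 [HB0 ->]] ->]]]] [h Hh]]].
      apply V_I. exists (subalg HP). split; [|exists h; auto].
      apply V_S. exists (Dalg B0), P, HP. split; auto. apply DV; auto.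
Qed.
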